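(* Let $D$ be a division ring and $R$ a maximal subring of $D$ which is not a division ring. Then $R$ is an abelian valuation ring for $D$ if and only if $D^c\subseteq R$. In this case $R$ is a duo ring.
   Context: All rings are associative unital and subrings share the identity. A maximal subring of a ring $T$ is a proper subring maximal under inclusion among proper subrings of $T$. $D^c$ denotes the derived (commutator) subgroup of the multiplicative group $D^*=D\setminus\{0\}$, generated by all $aba^{-1}b^{-1}$. A subring $R$ is an abelian valuation ring for $D$ if it is a valuation ring of $D$ (for each $x\in D^*$, $x\in R$ or $x^{-1}\in R$) with $dRd^{-1}=R$ for all $d\in D^*$ and with abelian value group $D^*/U(R)$. A ring is duo if every one-sided ideal is two-sided. *)

(* Defs.v *)
From HB Require Import structures.
From mathcomp Require Import all_boot all_order all_algebra.
Set Implicit Arguments. Unset Strict Implicit. Unset Printing Implicit Defensive.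
Import GRing.Theory.
Local Open Scope ring_scope.

Definition division_ring (D : unitRingType) : Prop :=
  forall x : D, x != 0 -> x \is a GRing.unit.

Definition is_subring (D : unitRingType) (S : pred D) : Prop :=
  subring_closed S.

Definition proper_subring (D : unitRingType) (S : pred D) : Prop :=
  is_subring S /\ exists x, x \notin S.

Definition maximal_subring (D : unitRingType) (R : pred D) : Prop :=
  proper_subring R /\
  forall S : pred D, proper_subring S -> {subset R <= S} -> {subset S <= R}.

Definition subring_is_division (D : unitRingType) (S : pred D) : Prop :=
  forall x, x \in S -> x != 0 -> x^-1 \in S.

Inductive derived_subgroup (D : unitRingType) : D -> Prop :=
  | der_comm a b : a != 0 -> b != 0 -> derived_subgroup (a * b * a^-1 * b^-1)
  | der_one : derived_subgroup 1
  | der_mul x y : derived_subgroup x -> derived_subgroup y -> derived_subgroup (x * y)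
  | der_inv x : derived_subgroup x -> derived_subgroup x^-1.

Definition sub_unit (D : unitRingType) (R : pred D) (x : D) : Prop :=
  x \in R /\ x != 0 /\ x^-1 \in R.

Definition valuation_ring (D : unitRingType) (R : pred D) : Prop :=
  is_subring R /\ forall x : D, x != 0 -> x \in R \/ x^-1 \in R.

(* Abelian valuation ring: valuation ring, invariant under all inner
   automorphisms (d R d^-1 = R), with abelian value group D^*/U(R).
   Commutativity of the quotient is stated as equality of cosets:
   (a U(R)) (b U(R)) = (b U(R)) (a U(R)), i.e. (b a)^-1 (a b) ∈ U(R). *)
Definition abelian_valuation_ring (D : unitRingType) (R : pred D) : Prop :=
  valuation_ring R /\
  (forall d : D, d != 0 -> forall x : D, (d * x * d^-1 \in R) <-> (x \in R)) /\
  (forall a b : D, a != 0 -> b != 0 -> sub_unit R ((b * a)^-1 * (a * b))).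

Definition left_ideal_of (D : unitRingType) (R : pred D) (I : pred D) : Prop :=
  {subset I <= R} /\ 0 \in I /\
  (forall x y, x \in I -> y \in I -> x - y \in I) /\
  (forall r x, r \in R -> x \in I -> r * x \in I).

Definition right_ideal_of (D : unitRingType) (R : pred D) (I : pred D) : Prop :=
  {subset I <= R} /\ 0 \in I /\
  (forall x y, x \in I -> y \in I -> x - y \in I) /\
  (forall r x, r \in R -> x \in I -> x * r \in I).

Definition duo_ring (D : unitRingType) (R : pred D) : Prop :=
  (forall I : pred D, left_ideal_of R I -> right_ideal_of R I) /\
  (forall I : pred D, right_ideal_of R I -> left_ideal_of R I).

(* Main.v *)
Require Import Defs.
From mathcomp Require Import all_boot all_order all_algebra.
From Stdlib Require Import ClassicalEpsilon Classical.
Set Implicit Arguments. Unset Strict Implicit.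
Import GRing.Theory.
Local Open Scope ring_scope.

Definition asb (P : Prop) : bool :=
  if excluded_middle_informative P then true else false.
Lemma asbP (P : Prop) : reflect P (asb P).
Proof. rewrite /asb; case: excluded_middle_informative => h; by constructor. Qed.

Lemma sr1 (D : unitRingType) (R : pred D) : subring_closed R -> 1 \in R.
Proof. by case. Qed.
Lemma srB (D : unitRingType) (R : pred D) : subring_closed R ->
  forall x y, x \in R -> y \in R -> x - y \in R.
Proof. by case=> _ h _ x y; apply: h. Qed.
Lemma srM (D : unitRingType) (R : pred D) : subring_closed R ->
  forall x y, x \in R -> y \in R -> x * y \in R.
Proof. by case=> _ _ h x y; apply: h. Qed.
Lemma sr0 (D : unitRingType) (R : pred D) : subring_closed R -> 0 \in R.
Proof. by move=> h; rewrite -(subrr 1) srB // sr1. Qed.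
Lemma srN (D : unitRingType) (R : pred D) : subring_closed R ->
  forall x, x \in R -> - x \in R.
Proof. by move=> h x xR; rewrite -sub0r srB // sr0. Qed.
Lemma srD (D : unitRingType) (R : pred D) : subring_closed R ->
  forall x y, x \in R -> y \in R -> x + y \in R.
Proof. by move=> h x y xR yR; rewrite -[y]opprK srB // srN. Qed.

Lemma unit_neq0 (D : unitRingType) (x : D) : x \is a GRing.unit -> x != 0.
Proof. by apply: contraTneq => ->; rewrite unitr0. Qed.

Lemma conjR (D : unitRingType) (R : pred D) :
  division_ring D -> subring_closed R ->
  (forall x, derived_subgroup x -> x \in R) ->
  forall d x, d != 0 -> x \in R -> d * x * d^-1 \in R.
Proof.
move=> hD hR hder d x dn0 xR.
case: (eqVneq x 0) => [->|xn0]; first by rewrite mulr0 mul0r sr0.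
have ux := hD x xn0.
have -> : d * x * d^-1 = (d * x * d^-1 * x^-1) * x by rewrite divrK.
by apply: srM => //; apply: hder; apply: der_comm.
Qed.
Lemma srX (D : unitRingType) (R : pred D) : subring_closed R ->
  forall x n, x \in R -> x ^+ n \in R.
Proof. move=> hR x n xR; elim: n => [|n IH]; first by rewrite expr0 sr1. by rewrite exprS srM. Qed.

Lemma powlem (D : unitRingType) (R : pred D) : subring_closed R ->
  forall a b, a \in R -> b \in R -> forall n, exists2 c, c \in R & (1 + a * b) ^+ n = 1 + a * c.
Proof.
move=> hR a b aR bR; elim=> [|n [c cR hc]].
  by exists 0; rewrite ?sr0 // expr0 mulr0 addr0.
exists (b + c + c * (a * b)); first by rewrite !srD // !srM.
rewrite exprSr hc !mulrDr !mulrDl !mul1r !mulr1 !mulrA.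
by rewrite -!addrA; congr (_ + _); rewrite addrCA.
Qed.

Lemma K1 (D : unitRingType) (R : pred D) :
  division_ring D -> maximal_subring R ->
  (forall x, derived_subgroup x -> x \in R) ->
  forall a b, a \in R -> a^-1 \notin R -> b \in R -> (1 + a * b)^-1 \in R.
Proof.
move=> hD [[hR _] hmax] hder a b aR ai bR.
have an0 : a != 0 by apply: contraNneq ai => ->; rewrite invr0 sr0.
have ua := hD a an0.
set w := 1 + a * b.
have wR : w \in R by rewrite srD // ?sr1 // srM.
have wn0 : w != 0.
  apply: contraNneq ai => w0.
  have : a * (- b) = 1 by rewrite mulrN; apply/eqP; rewrite -subr_eq0 -opprD addrC -/w w0 oppr0.
  move=> h; have -> : a^-1 = - b by rewrite -[RHS](mulKr ua) h mulr1.
  by rewrite srN.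
have uw := hD w wn0.
apply/negPn/negP => wi.
pose S := fun z => asb (exists n, z * w ^+ n \in R).
have hS : {subset S <= R}.
  apply: hmax; last first.
    by move=> z zR; apply/asbP; exists 0%N; rewrite expr0 mulr1.
  split.
    split.
    - by apply/asbP; exists 0%N; rewrite expr0 mulr1 sr1.
    - move=> z z' /asbP [n hn] /asbP [m hm]; apply/asbP; exists (n + m)%N.
      rewrite mulrBl; apply: srB => //.
        by rewrite exprD mulrA srM // srX.
      by rewrite addnC exprD mulrA srM // srX.
    - move=> z z' /asbP [n hn] /asbP [m hm]; apply/asbP; exists (n + m)%N.
      have uwn := unitrX n uw.
      have -> : z * z' * w ^+ (n + m) = (z * w ^+ n) * ((w ^+ n)^-1 * (z' * w ^+ m) * (w ^+ n)^-1^-1).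
        by rewrite invrK !mulrA mulrK // -!mulrA -exprD addnC.
      apply: srM => //; apply: conjR => //.
      by rewrite invr_neq0 // unit_neq0.
  exists a^-1; apply/negP => /asbP [n]; have [c cR ->] := @powlem D R hR a b aR bR n.
  rewrite mulrDr mulr1 mulrA mulVr // mul1r => h.
  by move/negP: ai; apply; rewrite -(addrK c a^-1) srB.
by move: wi; rewrite hS //; apply/asbP; exists 1%N; rewrite expr1 mulVr // sr1.
Qed.

Definition inM (D : unitRingType) (R : pred D) (a : D) : bool :=
  (a \in R) && ((a^-1 \in R) ==> (a == 0)).

Lemma M_R (D : unitRingType) (R : pred D) a : inM R a -> a \in R.
Proof. by case/andP. Qed.

Lemma M0 (D : unitRingType) (R : pred D) : subring_closed R -> inM R 0.
Proof. by move=> hR; rewrite /inM sr0 // eqxx implybT. Qed.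

Lemma M1 (D : unitRingType) (R : pred D) : subring_closed R -> ~~ inM R 1.
Proof. by move=> hR; rewrite /inM invr1 sr1 // oner_eq0. Qed.

Lemma MmulR (D : unitRingType) (R : pred D) : division_ring D -> subring_closed R ->
  forall m r, inM R m -> r \in R -> inM R (m * r).
Proof.
move=> hD hR m r /andP [mR hm] rR; rewrite /inM srM //=; apply/implyP => hi.
case: (eqVneq m 0) => [->|mn0]; first by rewrite mul0r.
case: (eqVneq r 0) => [->|rn0]; first by rewrite mulr0.
have um := hD m mn0; have ur := hD r rn0.
have : m^-1 \in R by rewrite -(mulVKr ur m^-1) -(invrM um ur) srM.
by move/(implyP hm); rewrite (negPf mn0).
Qed.

Lemma RmulM (D : unitRingType) (R : pred D) : division_ring D -> subring_closed R ->
  forall m r, inM R m -> r \in R -> inM R (r * m).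
Proof.
move=> hD hR m r /andP [mR hm] rR; rewrite /inM srM //=; apply/implyP => hi.
case: (eqVneq m 0) => [->|mn0]; first by rewrite mulr0.
case: (eqVneq r 0) => [->|rn0]; first by rewrite mul0r.
have um := hD m mn0; have ur := hD r rn0.
have : m^-1 \in R by rewrite -(divrK ur m^-1) -(invrM ur um) srM.
by move/(implyP hm); rewrite (negPf mn0).
Qed.

Lemma M_1sub (D : unitRingType) (R : pred D) :
  division_ring D -> maximal_subring R ->
  (forall x, derived_subgroup x -> x \in R) ->
  forall q, inM R q -> (1 - q)^-1 \in R /\ 1 - q != 0.
Proof.
move=> hD hmax hder q hq; have hR := hmax.1.1.
split; last first.
  apply: contraNneq (M1 hR) => h; have -> : 1 = q by apply/eqP; rewrite -subr_eq0 h.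
  by [].
case: (eqVneq q 0) => [->|qn0]; first by rewrite subr0 invr1 sr1.
move/andP: hq => [qR hq].
have qi : q^-1 \notin R by apply/negP => h; move: hq; rewrite h /= (negPf qn0).
by rewrite -mulrN1 (@K1 D R hD hmax hder q (-1)) // srN // sr1.
Qed.

Lemma MD (D : unitRingType) (R : pred D) :
  division_ring D -> maximal_subring R ->
  (forall x, derived_subgroup x -> x \in R) ->
  forall a b, inM R a -> inM R b -> inM R (a + b).
Proof.
move=> hD hmax hder a b ha hb; have hR := hmax.1.1.
rewrite /inM srD ?(M_R ha) ?(M_R hb) //=; apply/implyP => hv.
case: (eqVneq (a + b) 0) => // un0.
have uu := hD _ un0; set v := (a + b)^-1 in hv.
have vn0 : v != 0 by rewrite invr_neq0.
have uv := hD _ vn0.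
have hbv : b * v = 1 - a * v.
  by apply/eqP; rewrite eq_sym subr_eq -mulrDl [b + a]addrC mulrV.
have [hi hn0] := M_1sub hD hmax hder (MmulR hD hR ha hv).
rewrite -hbv in hi hn0.
have bn0 : b != 0 by apply: contraNneq hn0 => ->; rewrite mul0r.
have ub := hD _ bn0.
have : b^-1 \in R by rewrite -(mulVKr uv b^-1) -(invrM ub uv) srM.
move/andP: hb => [_ hb] /(implyP hb); by rewrite (negPf bn0).
Qed.

Inductive gen (D : unitRingType) (R : pred D) (x : D) : D -> Prop :=
  | g0 : gen R x 0
  | gmon r i : r \in R -> gen R x (r * x ^+ i)
  | gadd u v : gen R x u -> gen R x v -> gen R x (u + v).

Lemma gen_opp (D : unitRingType) (R : pred D) (x : D) : subring_closed R ->
  forall z, gen R x z -> gen R x (- z).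
Proof.
move=> hR z; elim=> [|r i rR|u v _ hu _ hv].
- by rewrite oppr0; constructor.
- by rewrite -mulNr; constructor; rewrite srN.
- by rewrite opprD; constructor.
Qed.

Lemma gen_mul (D : unitRingType) (R : pred D) (x : D) :
  division_ring D -> subring_closed R ->
  (forall x, derived_subgroup x -> x \in R) -> x != 0 ->
  forall z z', gen R x z -> gen R x z' -> gen R x (z * z').
Proof.
move=> hD hR hder xn0 z z' hz; elim: hz z' => [|r i rR|u v _ hu _ hv] z' hz'.
- by rewrite mul0r; constructor.
- elim: hz' => [|s j sR|u v _ hu _ hv].
  + by rewrite mulr0; constructor.
  + have ux := unitrX i (hD _ xn0).
    have -> : r * x ^+ i * (s * x ^+ j) = (r * (x ^+ i * s * (x ^+ i)^-1)) * x ^+ (i + j).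
      by rewrite exprD !mulrA divrK.
    constructor; apply: srM => //; apply: conjR => //; exact: unit_neq0.
  + by rewrite mulrDr; constructor.
- by rewrite mulrDl; constructor; [apply: hu | apply: hv].
Qed.

Lemma sum_ext (D : unitRingType) (x : D) (p : nat -> D) n N :
  (forall i, (n <= i)%N -> p i = 0) -> (n <= N)%N ->
  \sum_(i < N) p i * x ^+ i = \sum_(i < n) p i * x ^+ i.
Proof.
move=> hp hnN; rewrite -(subnKC hnN) big_split_ord /= [X in _ + X]big1 ?addr0 //.
by move=> i _; rewrite hp ?mul0r //= leq_addr.
Qed.

Lemma gen_sum (D : unitRingType) (R : pred D) (x : D) : subring_closed R ->
  forall z, gen R x z -> exists n (p : nat -> D), (forall i, p i \in R) /\
     (forall i, (n <= i)%N -> p i = 0) /\ z = \sum_(i < n) p i * x ^+ i.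
Proof.
move=> hR z; elim=> [|r i rR|u v _ [n [p [hp1 [hp2 ->]]]] _ [m [q [hq1 [hq2 ->]]]]].
- by exists 0%N, (fun _ => 0); split; [move=> _; rewrite sr0 | split => //; rewrite big_ord0].
- exists i.+1, (fun j => if j == i then r else 0); split; first by move=> j; case: ifP; rewrite ?sr0.
  split; first by move=> j hj; case: eqP => // eji; move: hj; rewrite eji ltnn.
  rewrite big_ord_recr /= eqxx big1 ?add0r // => j _.
  by rewrite (ltn_eqF (ltn_ord j)) mul0r.
- exists (maxn n m), (fun i => p i + q i); split; first by move=> i; rewrite srD.
  split; first by move=> i; rewrite geq_max => /andP [h1 h2]; rewrite hp2 // hq2 // addr0.
  rewrite -(sum_ext x hp2 (leq_maxl n m)) -(sum_ext x hq2 (leq_maxr n m)).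
  by rewrite -big_split /=; apply: eq_bigr => i _; rewrite mulrDl.
Qed.

Definition Rep (D : unitRingType) (R : pred D) (x : D) (n : nat) : Prop :=
  exists p : nat -> D, (forall i, inM R (p i)) /\ 1 = \sum_(i < n.+1) p i * x ^+ i.

Lemma Rep0 (D : unitRingType) (R : pred D) (x : D) : subring_closed R -> ~ Rep R x 0.
Proof.
move=> hR [p [hp]]; rewrite big_ord_recl big_ord0 addr0 expr0 mulr1 => e.
have h := hp 0%N; rewrite /= in e; rewrite -e in h.
by move: h; rewrite (negPf (M1 hR)).
Qed.

Lemma Rep_pad (D : unitRingType) (R : pred D) (x : D) : subring_closed R ->
  forall k n, Rep R x k -> (k <= n)%N -> Rep R x n.
Proof.
move=> hR k n [p [hp e]] kn.
exists (fun i => if (i < k.+1)%N then p i else 0); split.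
  by move=> i; case: ifP => _; rewrite ?M0.
rewrite (@sum_ext _ x (fun i => if (i < k.+1)%N then p i else 0) k.+1) //; last first.
  by move=> i hi; rewrite ltnNge hi.
by rewrite e; apply: eq_bigr => i _; rewrite ltn_ord.
Qed.

Lemma Rep_red (D : unitRingType) (R : pred D) :
  division_ring D -> maximal_subring R ->
  (forall x, derived_subgroup x -> x \in R) ->
  forall x n, x != 0 -> Rep R x n.+1 -> Rep R x^-1 n.+1 -> Rep R x n.
Proof.
move=> hD hmax hder x n xn0 [p [hp ep]] [q [hq eq]]; have hR := hmax.1.1.
have ux := hD _ xn0.
pose u := 1 - q 0%N.
have [vR un0] : u^-1 \in R /\ u != 0 := M_1sub hD hmax hder (hq 0%N).
have uu := hD _ un0; pose v := u^-1.
have eu : u = \sum_(j < n.+1) q j.+1 * x^-1 ^+ j.+1.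
  rewrite /u {1}eq big_ord_recl /= expr0 mulr1 addrAC subrr add0r.
  by [].
have eX : x ^+ n.+1 = \sum_(i < n.+1) v * q (n.+1 - i)%N * x ^+ i.
  rewrite -[LHS](mulKr uu) -/v eu mulr_suml mulr_sumr.
  rewrite (eq_bigr (fun j : 'I_n.+1 => v * q (j : nat).+1 * x ^+ (n - j))); last first.
    move=> j _.
    have hj : (j.+1 + (n - j))%N = n.+1 by rewrite addSn subnKC // -ltnS.
    have hx : x ^+ n.+1 = x ^+ j.+1 * x ^+ (n - j) by rewrite -exprD hj.
    rewrite hx exprVn !mulrA divrK //; exact: unitrX.
  rewrite -(big_mkord xpredT (fun j => v * q j.+1 * x ^+ (n - j))).
  rewrite -(big_mkord xpredT (fun i => v * q (n.+1 - i)%N * x ^+ i)).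
  rewrite big_nat_rev /= big_nat_cond [RHS]big_nat_cond.
  apply: eq_bigr => i /andP [/andP [_ hi] _].
  have hin : (i <= n)%N by rewrite -ltnS.
  by rewrite add0n subSS (subKn hin) (subSn hin).
exists (fun i => p i + p n.+1 * v * q (n.+1 - i)%N); split.
  move=> i; apply: (MD hD hmax hder) => //.
  by apply: MmulR => //; [apply: MmulR | apply: M_R].
rewrite ep big_ord_recr /= eX mulr_sumr -big_split /=.
by apply: eq_bigr => i _; rewrite mulrDl !mulrA.
Qed.

Lemma chev (D : unitRingType) (R : pred D) :
  division_ring D -> maximal_subring R ->
  (forall x, derived_subgroup x -> x \in R) ->
  forall N x n k, (n + k <= N)%N -> x != 0 -> Rep R x n -> Rep R x^-1 k -> False.
Proof.
move=> hD hmax hder; have hR := hmax.1.1.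
elim=> [|N IH] x n k hN xn0 hx hy.
  by move: hN; rewrite leqn0 addn_eq0 => /andP [/eqP h _]; move: hx; rewrite h; apply: Rep0.
wlog kn : x n k hN xn0 hx hy / (k <= n)%N.
  move=> hw; case: (leqP k n) => [kn|nk]; first exact: (hw x n k).
  apply: (hw x^-1 k n) => //; first by rewrite addnC.
    by rewrite invr_neq0.
  by rewrite invrK.
  exact: ltnW.
case: n hN hx kn => [|n] hN hx kn; first exact: (Rep0 hR hx).
have hy' := Rep_pad hR hy kn.
have hx' := Rep_red hD hmax hder xn0 hx hy'.
by apply: (IH x n k) => //; move: hN; rewrite addSn ltnS.
Qed.

Lemma valuation (D : unitRingType) (R : pred D) :
  division_ring D -> maximal_subring R ->
  (forall x, derived_subgroup x -> x \in R) -> ~ subring_is_division R ->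
  forall x, x != 0 -> x \in R \/ x^-1 \in R.
Proof.
move=> hD hmax hder hnd; have hR := hmax.1.1.
have [a [aR [an0 ai]]] : exists a, a \in R /\ a != 0 /\ a^-1 \notin R.
  apply: NNPP => H; apply: hnd => y yR yn0; apply/negPn/negP => yi.
  by apply: H; exists y.
have aM : inM R a by rewrite /inM aR /= (negPf ai).
have ua := hD _ an0.
have key : forall y, y != 0 -> y \notin R -> exists n, Rep R y n.
  move=> y yn0 yR.
  have hall : forall z, gen R y z.
    move=> z; apply: NNPP => hz.
    pose S := fun z => asb (gen R y z).
    have hS : {subset S <= R}.
      apply: hmax.2; last first.
        by move=> r rR; apply/asbP; have := @gmon D R y r 0%N rR; rewrite expr0 mulr1.
      split; last by exists z; apply/asbP.
      split.
      - by apply/asbP; have := @gmon D R y 1 0%N (sr1 hR); rewrite expr0 mulr1.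
      - move=> u w /asbP hu /asbP hw; apply/asbP; constructor => //.
        exact: gen_opp.
      - move=> u w /asbP hu /asbP hw; apply/asbP; exact: gen_mul.
    by move/negP: yR; apply; apply: hS; apply/asbP; have := @gmon D R y 1 1%N (sr1 hR); rewrite expr1 mul1r.
  have [m [p [hp1 [_ e]]]] := gen_sum hR (hall a^-1).
  case: m p hp1 e => [|m] p hp1 e.
    by move: e; rewrite big_ord0 => /eqP; rewrite invr_eq0 (negPf an0).
  exists m, (fun i => a * p i); split; first by move=> i; exact: (MmulR hD hR aM (hp1 i)).
  by rewrite -(mulrV ua) e mulr_sumr; apply: eq_bigr => i _; rewrite mulrA.
move=> x xn0; case: (boolP (x \in R)) => xR; first by left.
case: (boolP (x^-1 \in R)) => xiR; first by right.
have [n hn] := key x xn0 xR.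
have [k hk] := key x^-1 (invr_neq0 xn0) xiR.
by exfalso; apply: (chev hD hmax hder (leqnn (n + k)) xn0 hn hk).
Qed.

Lemma fwd (D : unitRingType) (R : pred D) :
  division_ring D -> subring_closed R -> abelian_valuation_ring R ->
  forall x, derived_subgroup x -> sub_unit R x.
Proof.
move=> hD hR [_ [_ hab]] x; elim=> [a b an0 bn0| |u w _ [uR [un0 uiR]] _ [wR [wn0 wiR]]|u _ [uR [un0 uiR]]].
- have ua := hD _ an0; have ub := hD _ bn0.
  have := hab a^-1 b^-1 (invr_neq0 an0) (invr_neq0 bn0).
  rewrite invrM ?unitrV // !invrK mulrA.
  by [].
- by rewrite /sub_unit invr1 sr1 // oner_neq0.
- have uu := hD _ un0; have uw := hD _ wn0.
  split; first exact: srM.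
  split; first by apply: unit_neq0; rewrite unitrMr.
  by rewrite invrM // srM.
- split => //; split; first by rewrite invr_neq0.
  by rewrite invrK.
Qed.

Lemma bwd (D : unitRingType) (R : pred D) :
  division_ring D -> maximal_subring R -> ~ subring_is_division R ->
  (forall x, derived_subgroup x -> x \in R) -> abelian_valuation_ring R.
Proof.
move=> hD hmax hnd hder; have hR := hmax.1.1.
split; first by split => //; apply: valuation.
split.
  move=> d dn0 x; have ud := hD _ dn0; split => h; last exact: conjR.
  have -> : x = d^-1 * (d * x * d^-1) * d^-1^-1.
    by rewrite invrK !mulrA mulVr // mul1r divrK.
  by apply: conjR => //; rewrite invr_neq0.
move=> a b an0 bn0; have ua := hD _ an0; have ub := hD _ bn0.
have -> : (b * a)^-1 * (a * b) = a^-1 * b^-1 * a^-1^-1 * b^-1^-1.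
  by rewrite invrM // !invrK !mulrA.
have hc := der_comm (invr_neq0 an0) (invr_neq0 bn0).
split; first exact: hder.
split; last by apply: hder; apply: der_inv.
apply: unit_neq0; rewrite !unitrMl ?unitrV //.
Qed.

Lemma duo (D : unitRingType) (R : pred D) :
  division_ring D -> subring_closed R -> abelian_valuation_ring R -> duo_ring R.
Proof.
move=> hD hR [_ [hinv _]]; split.
- move=> I [hsub [h0 [hB hM]]]; split => //; split => //; split => //.
  move=> r x rR xI.
  case: (eqVneq x 0) => [->|xn0]; first by rewrite mul0r.
  have ux := hD _ xn0.
  have -> : x * r = (x * r * x^-1) * x by rewrite divrK.
  by apply: hM => //; apply/(hinv x xn0).
- move=> I [hsub [h0 [hB hM]]]; split => //; split => //; split => //.
  move=> r x rR xI.
  case: (eqVneq x 0) => [->|xn0]; first by rewrite mulr0.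
  have ux := hD _ xn0.
  have -> : r * x = x * (x^-1 * r * x^-1^-1) by rewrite invrK !mulrA mulrV // mul1r.
  by apply: hM => //; apply/(hinv x^-1 (invr_neq0 xn0)).
Qed.

Theorem proposition3p4 (D : unitRingType) (R : pred D) :
  division_ring D ->
  maximal_subring R ->
  ~ subring_is_division R ->
  ((abelian_valuation_ring R <-> (forall x : D, derived_subgroup x -> x \in R))
   /\ (abelian_valuation_ring R -> duo_ring R)).
Proof.
move=> hD hmax hnd; have hR := hmax.1.1; split; last exact: duo.
split; first by move=> h x hx; case: (fwd hD hR h hx).
exact: bwd.
Qed.
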